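(* Let $H$ be a Hilbert space and $U_{ik}\in B(H)$, $i,k=1,\dots,n$, operators satisfying relations (R1)–(R5). Then each $U_{ik}$ and each $U_{ik}^*$ is a partial isometry.
   Context: $n\ge2$, $\theta\in M_n(\mathbb R)$ skew-symmetric, $\omega_{ij}=e^{2\pi i\theta_{ij}}$. Relations, for all $i,j,k,l\in\{1,\dots,n\}$: (R1) $U_{ik}U_{jl}+\omega_{ji}U_{jk}U_{il}=\omega_{kl}U_{il}U_{jk}+\omega_{ji}\omega_{kl}U_{jl}U_{ik}$; (R2) $\sum_iU_{ik}U_{il}^*=\delta_{kl}1$; (R3) $\sum_iU_{il}^*U_{ik}=\delta_{kl}1$; (R4) $U_{jk}U_{ik}^*=0$ for $i\neq j$; (R5) $U_{ik}^*U_{jk}=0$ for $i\neq j$. *)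

(* Defs.v *)
From HB Require Import structures.
From mathcomp Require Import all_boot all_order all_algebra.
From mathcomp Require Import complex.
From mathcomp Require Import all_classical all_reals all_analysis.
Set Implicit Arguments. Unset Strict Implicit. Unset Printing Implicit Defensive.
Import Order.TTheory GRing.Theory Num.Theory.
Local Open Scope ring_scope.

Definition inner_product (R : realType) (H : lmodType R[i]) (ip : H -> H -> R[i]) :=
  [/\ forall (a : R[i]) (x y z : H), ip (a *: x + y) z = a * ip x z + ip y z,
      forall x y : H, ip y x = (ip x y)^*,
      forall x : H, 0 <= ip x x
    & forall x : H, ip x x = 0 -> x = 0].

(* ||d||^2 = ip d d; "||d|| < e" is expressed as ip d d < e^2. *)
Definition hilbert_space (R : realType) (H : lmodType R[i]) (ip : H -> H -> R[i]) :=
  inner_product ip /\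
  forall u : nat -> H,
    (forall e : R[i], 0 < e -> exists N : nat, forall m k : nat, (N <= m)%N -> (N <= k)%N ->
        ip (u m - u k) (u m - u k) < e) ->
    exists x : H, forall e : R[i], 0 < e -> exists N : nat, forall m : nat, (N <= m)%N ->
        ip (u m - x) (u m - x) < e.

Definition bounded_op (R : realType) (H : lmodType R[i]) (ip : H -> H -> R[i]) (T : H -> H) :=
  (forall (a : R[i]) (x y : H), T (a *: x + y) = a *: T x + T y) /\
  exists M : R[i], 0 <= M /\ forall x : H, ip (T x) (T x) <= M * ip x x.

Definition is_adjoint (R : realType) (H : lmodType R[i]) (ip : H -> H -> R[i]) (T S : H -> H) :=
  forall x y : H, ip (T x) y = ip x (S y).

(* T is a partial isometry: T^* T is a projection (idempotent; it is automatically self-adjoint). *)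
Definition partial_isometry (R : realType) (H : lmodType R[i]) (ip : H -> H -> R[i]) (T : H -> H) :=
  exists S : H -> H, is_adjoint ip T S /\
    forall x : H, S (T (S (T x))) = S (T x).

(* omega_ij = exp(2 pi i theta_ij) *)
Definition omega (R : realType) (n : nat) (theta : 'M[R]_n) (i j : 'I_n) : R[i] :=
  Complex (cos (2 * pi * theta i j)) (sin (2 * pi * theta i j)).

(* Main.v *)
Require Import Defs.
From HB Require Import structures.
From mathcomp Require Import all_boot all_order all_algebra.
From mathcomp Require Import complex.
From mathcomp Require Import all_classical all_reals all_analysis.
Import Order.TTheory GRing.Theory Num.Theory.
Local Open Scope ring_scope.

Theorem proposition3p8 (R : realType) (n : nat) (hn : (2 <= n)%N)
  (theta : 'M[R]_n) (htheta : theta^T = - theta)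
  (H : lmodType R[i]) (ip : H -> H -> R[i]) (hH : hilbert_space ip)
  (U Ustar : 'I_n -> 'I_n -> H -> H)
  (hU : forall i k, bounded_op ip (U i k))
  (hUstar : forall i k, is_adjoint ip (U i k) (Ustar i k))
  (R1 : forall (i j k l : 'I_n) (x : H),
      U i k (U j l x) + omega theta j i *: U j k (U i l x)
      = omega theta k l *: U i l (U j k x)
        + (omega theta j i * omega theta k l) *: U j l (U i k x))
  (R2 : forall (k l : 'I_n) (x : H),
      \sum_(i < n) U i k (Ustar i l x) = (if k == l then x else 0))
  (R3 : forall (k l : 'I_n) (x : H),
      \sum_(i < n) Ustar i l (U i k x) = (if k == l then x else 0))
  (R4 : forall (i j k : 'I_n) (x : H), i != j -> U j k (Ustar i k x) = 0)
  (R5 : forall (i j k : 'I_n) (x : H), i != j -> Ustar i k (U j k x) = 0) :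
  forall i k : 'I_n, partial_isometry ip (U i k) /\ partial_isometry ip (Ustar i k).
Proof.
have key : forall i k y, U i k (Ustar i k (U i k y)) = U i k y.
  move=> i k y.
  have [lin _] := hU i k.
  have T0 : U i k 0 = 0.
    have h := lin 1 0 0; rewrite !scale1r addr0 in h.
    by apply: (addrI (U i k 0)); rewrite addr0 -h.
  have TD : forall a b, U i k (a + b) = U i k a + U i k b.
    by move=> a b; have := lin 1 a b; rewrite !scale1r.
  have := R3 k k y; rewrite eqxx => E.
  rewrite -{2}E (big_morph _ TD T0) (bigD1 i) //= big1 ?addr0 //.
  by move=> j hj; apply: R4.
move=> i k; split.
  exists (Ustar i k); split; first exact: hUstar.
  by move=> x; rewrite key.
exists (U i k); split; last by move=> x; rewrite key.
move=> x y.
have [[_ hs _ _] _] := hH.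
by rewrite hs -hUstar -hs.
Qed.
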